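(* Let $n\ge 5$ and let $C_n$ be the cycle with $n$ vertices. Then $C_n$ is not a $2$-threshold graph: there are no real numbers $\theta_1<\theta_2$ and map $r:V(C_n)\to\mathbb{R}$ such that for all distinct vertices $u,v$, $uv$ is an edge if and only if $\theta_1\le r(u)+r(v)<\theta_2$.
   Context: All graphs are finite and simple. $C_n$ denotes the cycle with $n$ vertices. *)

(* Defs.v *)
From mathcomp Require Import all_boot all_order all_algebra.
From mathcomp Require Import reals.
Set Implicit Arguments. Unset Strict Implicit. Unset Printing Implicit Defensive.
Import Order.TTheory GRing.Theory Num.Theory.
Local Open Scope ring_scope.

(* Cycle C_n on vertex set 'I_n: i ~ j iff j = i+1 mod n or i = j+1 mod n,
   and i <> j (simple graph). For n >= 3 this is the n-cycle. *)
Definition cycle_adj (n : nat) : rel 'I_n :=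
  fun i j => (i != j) &&
    ((j == (i.+1 %% n)%N :> nat) || (i == (j.+1 %% n)%N :> nat)).

Definition two_threshold (R : realType) (V : finType) (adj : rel V) : Prop :=
  exists (theta1 theta2 : R) (r : V -> R),
    theta1 < theta2 /\
    forall u v : V, u != v ->
      (adj u v <-> (theta1 <= r u + r v) && (r u + r v < theta2)).
Arguments cycle_adj n : clear implicits.

(* Main.v *)
Require Import Defs.
From mathcomp Require Import all_boot all_order all_algebra.
From mathcomp Require Import reals.
From mathcomp Require Import zify.
Set Implicit Arguments. Unset Strict Implicit. Unset Printing Implicit Defensive.
Import Order.TTheory GRing.Theory Num.Theory.
Local Open Scope ring_scope.

Lemma min_exists (R : realType) (n : nat) (x : 'I_n -> R) (i0 : 'I_n) :
  exists k, forall i, x k <= x i.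
Proof.
case: (@arg_minP _ _ 'I_n i0 xpredT x) => // k _ H.
by exists k => i; apply: H.
Qed.

Section S.
Variable n : nat.
Hypothesis n5 : (5 <= n)%N.

Lemma modSo (i : 'I_n) : (i.+1 %% n = if (i.+1 < n) then i.+1 else 0)%N.
Proof.
case: ifP => h; first by rewrite modn_small.
have -> : i.+1 = n by have := ltn_ord i; lia.
by rewrite modnn.
Qed.

Lemma sc_lt (k : 'I_n) : ((if k.+1 < n then k.+1 else 0) < n)%N.
Proof. case: ifP => //; lia. Qed.
Lemma pc_lt (k : 'I_n) : ((if k == 0%N :> nat then n.-1 else k.-1) < n)%N.
Proof. have := ltn_ord k; case: ifP => _; lia. Qed.

Definition sc (k : 'I_n) : 'I_n := Ordinal (sc_lt k).
Definition pc (k : 'I_n) : 'I_n := Ordinal (pc_lt k).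

Ltac crush k := rewrite /cycle_adj -?(inj_eq val_inj) !modSo /=;
  have := ltn_ord k; repeat (case: ifP => /=); move=> *; lia.

Lemma adj_s k : cycle_adj n k (sc k).
Proof. crush k. Qed.
Lemma adj_p k : cycle_adj n (pc k) k.
Proof. crush k. Qed.
Lemma nadj1 k : ~~ cycle_adj n (sc (sc k)) (pc k).
Proof. crush k. Qed.
Lemma nadj2 k : ~~ cycle_adj n (pc (pc k)) (sc k).
Proof. crush k. Qed.
Lemma ne1 k : sc (sc k) != pc k.
Proof. rewrite -(inj_eq val_inj) /=; have := ltn_ord k; repeat (case: ifP => /=); move=> *; lia. Qed.
Lemma ne2 k : pc (pc k) != sc k.
Proof. rewrite -(inj_eq val_inj) /=; have := ltn_ord k; repeat (case: ifP => /=); move=> *; lia. Qed.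
End S.

Theorem mainTheorem3 (R : realType) (n : nat) :
  (5 <= n)%N -> ~ two_threshold R (cycle_adj n).
Proof.
move=> n5 [t1 [t2 [x [_ W]]]].
have ne : forall u v : 'I_n, cycle_adj n u v -> u != v.
  by move=> u v /andP [].
have sym : forall u v : 'I_n, cycle_adj n u v -> cycle_adj n v u.
  move=> u v a; have uv := ne _ _ a.
  have vu : v != u by rewrite eq_sym.
  by apply/(W _ _ vu); rewrite addrC; apply/(W _ _ uv).
have L : forall u u' v v', u != v -> cycle_adj n u u' -> x v <= x u' ->
    cycle_adj n v' v -> x v' <= x u -> cycle_adj n u v.
  move=> u u' v v' uv a1 h1 a2 h2.
  have /(W _ _ (ne _ _ a1)) /andP [_ w1] := a1.
  have /(W _ _ (ne _ _ a2)) /andP [w2 _] := a2.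
  apply/(W _ _ uv)/andP; split.
    by apply: le_trans w2 _; rewrite lerD2r.
  by apply: le_lt_trans w1; rewrite lerD2l.
have [k hk] := min_exists x (Ordinal (leq_trans (isT : (0 < 5)%N) n5)).
case: (lerP (x (pc n5 k)) (x (sc n5 k))) => h.
- move/negP: (nadj1 n5 k); apply.
  apply: (L _ (sc n5 k) _ k (ne1 n5 k) (sym _ _ (adj_s n5 (sc n5 k))) h
          (sym _ _ (adj_p n5 k)) (hk _)).
- move/negP: (nadj2 n5 k); apply.
  apply: (L _ (pc n5 k) _ k (ne2 n5 k) (adj_p n5 (pc n5 k)) (ltW h)
          (adj_s n5 k) (hk _)).
Qed.
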